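(* For any uncountable analytic set $A\subseteq L(E)$, there are a nonempty perfect set $P\subseteq A$ and an infinite-dimensional subspace $V$ of $E$ such that either (i) for all $T\in P$, $V\subseteq\ker(T)$, or (ii) for all $T\in P$, $T\restriction V$ is injective.
   Context: $F$ is a countable (possibly finite) field and $E$ is a countably infinite-dimensional $F$-vector space (with a fixed basis), regarded as a discrete set. $L(E)$ is the set of all $F$-linear maps $E\to E$ with the topology inherited as a subspace of the product space $E^E$; it is an uncountable Polish space. *)

(* Defs.v *)
From mathcomp Require Import all_boot all_order all_algebra.
From mathcomp Require Import boolp classical_sets functions cardinality.

Set Implicit Arguments.
Unset Strict Implicit.
Unset Printing Implicit Defensive.
Import GRing.Theory.
Local Open Scope ring_scope.
Local Open Scope classical_set_scope.

Definition nat_basis (F : fieldType) (E : lmodType F) (e : nat -> E) : Prop :=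
  (forall (n : nat) (c : 'I_n -> F),
      \sum_(i < n) c i *: e i = 0 -> forall i, c i = 0) /\
  (forall v : E, exists (n : nat) (c : 'I_n -> F), v = \sum_(i < n) c i *: e i).

Definition is_linear_map (F : fieldType) (E : lmodType F) (T : E -> E) : Prop :=
  forall (a : F) (u v : E), T (a *: u + v) = a *: T u + T v.

Definition LE (F : fieldType) (E : lmodType F) : set (E -> E) :=
  [set T | is_linear_map T].

(* Basic open neighbourhoods of the product topology on E^E (E discrete):
   S agrees with T on the finite list of points xs. *)
Definition agree_on (F : fieldType) (E : lmodType F) (xs : seq E) (S T : E -> E) :
  Prop := forall x, x \in xs -> S x = T x.

Definition LE_closed (F : fieldType) (E : lmodType F) (P : set (E -> E)) : Prop :=
  P `<=` @LE F E /\
  forall T, @LE F E T -> (forall xs : seq E, exists S, P S /\ agree_on xs S T) -> P T.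

Definition LE_perfect (F : fieldType) (E : lmodType F) (P : set (E -> E)) : Prop :=
  LE_closed P /\
  forall T, P T -> forall xs : seq E, exists S, P S /\ S <> T /\ agree_on xs S T.

Definition baire_continuous (F : fieldType) (E : lmodType F)
  (f : (nat -> nat) -> (E -> E)) : Prop :=
  forall (alpha : nat -> nat) (x : E), exists n : nat,
    forall beta : nat -> nat, (forall i, (i < n)%N -> beta i = alpha i) ->
      f beta x = f alpha x.

Definition LE_analytic (F : fieldType) (E : lmodType F) (A : set (E -> E)) : Prop :=
  A `<=` @LE F E /\
  (A = set0 \/ exists f : (nat -> nat) -> (E -> E),
                 baire_continuous f /\ range f = A).

Definition subspace (F : fieldType) (E : lmodType F) (V : set E) : Prop :=
  V 0 /\ forall (a : F) (u v : E), V u -> V v -> V (a *: u + v).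

Definition infinite_dim (F : fieldType) (E : lmodType F) (V : set E) : Prop :=
  forall n : nat, exists v : 'I_n -> E,
    (forall i, V (v i)) /\
    forall c : 'I_n -> F, \sum_(i < n) c i *: v i = 0 -> forall i, c i = 0.

(* Main.v *)
Require Import Defs.
From mathcomp Require Import all_boot all_order all_algebra.
From mathcomp Require Import boolp classical_sets functions cardinality.
Import GRing.Theory.
Local Open Scope ring_scope.
Local Open Scope classical_set_scope.

Set Implicit Arguments.
Unset Strict Implicit.
Unset Printing Implicit Defensive.

Section LinAlg.
Variables (F : fieldType) (E : lmodType F).

Definition inspan (xs : seq E) (v : E) : Prop :=
  exists c : nat -> F, v = \sum_(i < size xs) c i *: nth 0 xs i.

Definition indep (xs : seq E) : Prop :=
  forall c : nat -> F, \sum_(i < size xs) c i *: nth 0 xs i = 0 ->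
    forall i, (i < size xs)%N -> c i = 0.

Lemma sum_rcons (xs : seq E) x (c : nat -> F) :
  \sum_(i < size (rcons xs x)) c i *: nth 0 (rcons xs x) i =
  \sum_(i < size xs) c i *: nth 0 xs i + c (size xs) *: x.
Proof.
rewrite size_rcons big_ord_recr /= nth_rcons ltnn eqxx; congr (_ + _).
by apply: eq_bigr => i _; rewrite nth_rcons ltn_ord.
Qed.

Lemma indep_rcons_inv xs x : indep (rcons xs x) -> indep xs.
Proof.
move=> h c hc i hi.
pose c' := fun j => if (j < size xs)%N then c j else 0.
have := h c'; rewrite (sum_rcons xs x c') /c' ltnn scale0r addr0.
have -> : \sum_(i < size xs) (if (i < size xs)%N then c i else 0) *: nth 0 xs i =
          \sum_(i < size xs) c i *: nth 0 xs i.
  by apply: eq_bigr => j _; rewrite ltn_ord.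
move=> /(_ hc i); rewrite size_rcons /c' hi; apply.
by rewrite ltnS ltnW.
Qed.

Lemma indep_rcons xs x : indep xs -> ~ inspan xs x -> indep (rcons xs x).
Proof.
move=> hi hn c; rewrite sum_rcons => hc.
have hlast : c (size xs) = 0.
  apply/eqP; apply/negPn/negP => hne; apply: hn.
  exists (fun j => - (c (size xs))^-1 * c j).
  rewrite (eq_bigr (fun j : 'I_(size xs) => - (c (size xs))^-1 *: (c j *: nth 0 xs j)));
    last by move=> j _; rewrite scalerA.
  rewrite -scaler_sumr.
  have -> : \sum_(i < size xs) c i *: nth 0 xs i = - (c (size xs) *: x).
    by apply/eqP; rewrite -subr_eq0 opprK hc.
  by rewrite scalerN scaleNr opprK scalerA mulVf ?scale1r.
move: hc; rewrite hlast scale0r addr0 => hc i; rewrite size_rcons ltnS leq_eqVlt.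
by case/orP => [/eqP -> //|]; apply: hi.
Qed.

Lemma not_indep_rcons xs x : indep xs -> ~ indep (rcons xs x) -> inspan xs x.
Proof.
move=> hi hn; apply: contrapT => hs; apply: hn; exact: indep_rcons.
Qed.

Variable T : E -> E.
Hypothesis hT : is_linear_map T.

Lemma linT0 : T 0 = 0.
Proof.
have h := hT 1 0 0; rewrite !scale1r addr0 in h.
by have := congr1 (fun z => z - T 0) h; rewrite /= subrr addrK => <-.
Qed.

Lemma linTZ a u : T (a *: u) = a *: T u.
Proof. by have := hT a u 0; rewrite addr0 linT0 addr0. Qed.

Lemma linTD u v : T (u + v) = T u + T v.
Proof. by have := hT 1 u v; rewrite !scale1r. Qed.

Lemma linTN u : T (- u) = - T u.
Proof. by rewrite -scaleN1r linTZ scaleN1r. Qed.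

Lemma linT_sum n (c : nat -> F) (g : nat -> E) :
  T (\sum_(i < n) c i *: g i) = \sum_(i < n) c i *: T (g i).
Proof.
elim: n => [|n ih]; first by rewrite !big_ord0 linT0.
by rewrite !big_ord_recr /= linTD linTZ ih.
Qed.

End LinAlg.

Lemma kernel_vec (F : fieldType) (I : finType) (N : nat) (M : 'I_N -> I -> F) :
  (#|I| < N)%N -> exists c : 'I_N -> F, (exists i, c i != 0) /\
    forall k : I, \sum_(i < N) c i * M i k = 0.
Proof.
move=> hN.
pose A : 'M[F]_(N, #|I|) := \matrix_(i, k) M i (enum_val k).
have hr : (0 < \rank (kermx A))%N.
  rewrite mxrank_ker subn_gt0; apply: leq_ltn_trans hN; exact: rank_leq_col.
have : kermx A != 0 by apply: contraTneq hr => ->; rewrite mxrank0.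
case/eqP/matrixP/boolp.existsNP => i0 /boolp.existsNP [j0 hj0].
exists (fun i => kermx A i0 i); split; first by exists j0; apply/eqP => h; apply: hj0; rewrite h mxE.
have hA : forall i k, A i k = M i (enum_val k) by move=> i k; rewrite mxE.
move=> k; have := mulmx_ker A => /matrixP /(_ i0 (enum_rank k)).
rewrite !mxE => h; apply: (etrans _ h); apply: eq_bigr => i _; by rewrite hA enum_rankK.
Qed.

Set Implicit Arguments.
Unset Strict Implicit.
Unset Printing Implicit Defensive.

Section Basis.
Variables (F : fieldType) (E : lmodType F) (e : nat -> E).
Hypothesis he : nat_basis e.

Lemma bas_indep n (c : nat -> F) : \sum_(i < n) c i *: e i = 0 ->
  forall i, (i < n)%N -> c i = 0.
Proof.
move=> h i hi; have := he.1 n (fun j : 'I_n => c j) h (Ordinal hi); done.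
Qed.

Lemma bas_span v : exists n (c : nat -> F), v = \sum_(i < n) c i *: e i.
Proof.
have [n [c ->]] := he.2 v.
exists n, (fun i => if insub i is Some j then c j else 0).
by apply: eq_bigr => i _; rewrite valK.
Qed.

Lemma sum_widen n a (c : nat -> F) (g : nat -> E) : (n <= a)%N ->
  \sum_(i < n) c i *: g i = \sum_(i < a) (if (i < n)%N then c i else 0) *: g i.
Proof.
move=> hna; rewrite (big_ord_widen a (fun i => c i *: g i) hna) big_mkcond /=.
by apply: eq_bigr => i _; case: ifP => // _; rewrite scale0r.
Qed.

Lemma list_in_e (xs : seq E) : exists a, forall x, x \in xs ->
  exists c : nat -> F, x = \sum_(i < a) c i *: e i.
Proof.
elim: xs => [|x xs [a ih]]; first by exists 0%N.
have [n [c hc]] := bas_span x.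
exists (maxn a n) => z; rewrite in_cons => /orP [/eqP ->|/ih [c' ->]].
  exists (fun i => if (i < n)%N then c i else 0).
  by rewrite hc (sum_widen c e (leq_maxr a n)).
exists (fun i => if (i < a)%N then c' i else 0).
by rewrite (sum_widen c' e (leq_maxl a n)).
Qed.

Lemma span_in_e (xs : seq E) a v :
  (forall x, x \in xs -> exists c : nat -> F, x = \sum_(i < a) c i *: e i) ->
  inspan xs v -> exists c : nat -> F, v = \sum_(i < a) c i *: e i.
Proof.
move=> hx [b ->].
have hc : forall j : 'I_(size xs), exists c : nat -> F,
    nth 0 xs j = \sum_(i < a) c i *: e i.
  by move=> j; apply: hx; rewrite mem_nth.
have [C hC] := choice hc.
exists (fun k => \sum_(j < size xs) b j * C j k).
rewrite (eq_bigr (fun j : 'I_(size xs) => \sum_(i < a) (b j * C j i) *: e i)); last first.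
  by move=> j _; rewrite hC scaler_sumr; apply: eq_bigr => i _; rewrite scalerA.
rewrite exchange_big /=; apply: eq_bigr => i _; by rewrite scaler_suml.
Qed.

Lemma basis_sep (g : nat -> nat) N a (c b : nat -> F) :
  injective g -> (forall i, (a <= g i)%N) ->
  \sum_(i < N) c i *: e (g i) = \sum_(k < a) b k *: e k ->
  forall i, (i < N)%N -> c i = 0.
Proof.
move=> ginj ga h i0 hi0.
pose M := maxn a (\max_(i < N) (g i).+1).
have hgM : forall i, (i < N)%N -> (g i < M)%N.
  move=> i hi; rewrite /M leq_max; apply/orP; right.
  exact: (@leq_bigmax_cond _ xpredT (fun j : 'I_N => (g j).+1) (Ordinal hi)).
have haM : (a <= M)%N by rewrite leq_maxl.
pose d := fun k => \sum_(i < N | g i == k) c i - (if (k < a)%N then b k else 0).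
have hd : \sum_(k < M) d k *: e k = 0.
  rewrite (eq_bigr (fun k : 'I_M => \sum_(i < N | g i == k) c i *: e k -
     (if (k < a)%N then b k else 0) *: e k)); last first.
    by move=> k _; rewrite scalerBl scaler_suml.
  rewrite sumrB -(sum_widen b e haM) -h; apply/eqP; rewrite subr_eq0; apply/eqP.
  rewrite (exchange_big_dep xpredT) //=; apply: eq_bigr => i _.
  rewrite (big_pred1 (Ordinal (hgM i (ltn_ord i)))) //= => k.
have := bas_indep hd (hgM i0 hi0); rewrite /d ltnNge ga /= subr0.
rewrite (big_pred1 (Ordinal hi0)) // => j /=.
by rewrite -val_eqE /=; apply/eqP/eqP => [/ginj|->].
Qed.

End Basis.

Lemma enum_E (F : countFieldType) (E : lmodType F) (e : nat -> E) :
  nat_basis e -> exists y : nat -> E, forall x, exists k, y k = x.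
Proof.
move=> he.
pose g := fun s : seq F => \sum_(i < size s) nth 0 s i *: e i.
exists (fun k => if @unpickle (seq F) k is Some s then g s else 0).
move=> x; have [n [c ->]] := bas_span he x.
exists (pickle (mkseq c n)); rewrite pickleK /g size_mkseq.
by apply: eq_bigr => i _; rewrite nth_mkseq.
Qed.

Set Implicit Arguments.
Unset Strict Implicit.
Unset Printing Implicit Defensive.

Lemma countableU2 T (A B : set T) : countable A -> countable B -> countable (A `|` B).
Proof.
move=> cA cB.
have : countable (\bigcup_(i in [set: bool]) (if i then A else B)).
  by apply: bigcup_countable => // -[].
apply: sub_countable; apply: subset_card_le => x [ax|bx].
  by exists true.
by exists false.
Qed.

Lemma uncount_ne T (A : set T) : ~ countable A -> exists x, A x.
Proof.
move=> h; apply: contrapT => hn; apply: h.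
have -> : A = set0 by apply/seteqP; split => x // ax; apply: hn; exists x.
exact: countable0.
Qed.

Lemma uncount_sub T (A B : set T) : A `<=` B -> ~ countable A -> ~ countable B.
Proof. by move=> hAB hA hB; apply: hA; apply: sub_countable hB; exact: subset_card_le. Qed.

Section Fus.
Variables (F : fieldType) (E : lmodType F) (f : (nat -> nat) -> (E -> E)).
Hypothesis hf : baire_continuous f.
Variable y : nat -> E.
Hypothesis hy : forall x, exists k, y k = x.

Definition Nb (s : seq nat) (a : nat -> nat) := forall i, (i < size s)%N -> a i = nth 0%N s i.
Definition nimg (Q : (E -> E) -> Prop) s : set (E -> E) :=
  [set T | exists a, Nb s a /\ Q (f a) /\ f a = T].
Definition pext (s s' : seq nat) :=
  (size s <= size s')%N /\ forall i, (i < size s)%N -> nth 0%N s' i = nth 0%N s i.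
Definition cstk s K := forall a b, Nb s a -> Nb s b -> forall i, (i < K)%N -> f a (y i) = f b (y i).
Definition sepk s1 s2 K := exists j, (j < K)%N /\
  forall a b, Nb s1 a -> Nb s2 b -> f a (y j) <> f b (y j).

Lemma ext_trans s1 s2 s3 : pext s1 s2 -> pext s2 s3 -> pext s1 s3.
Proof.
move=> [h1 h1'] [h2 h2']; split; first exact: leq_trans h2.
by move=> i hi; rewrite h2' ?h1' // (leq_trans hi h1).
Qed.

Lemma Nb_ext s s' a : pext s s' -> Nb s' a -> Nb s a.
Proof.
move=> [h1 h2] ha i hi; rewrite -h2 //; apply: ha; exact: leq_trans hi h1.
Qed.

Lemma Nb_mkseq a L b : Nb (mkseq a L) b <-> forall i, (i < L)%N -> b i = a i.
Proof.
rewrite /Nb size_mkseq; split => h i hi; move: (h i hi); by rewrite nth_mkseq.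
Qed.

Lemma cont_list a K : exists L, forall b, (forall i, (i < L)%N -> b i = a i) ->
  forall i, (i < K)%N -> f b (y i) = f a (y i).
Proof.
elim: K => [|K [L1 ih]]; first by exists 0%N.
have [n hn] := hf a (y K).
exists (maxn L1 n) => b hb i; rewrite ltnS leq_eqVlt => /orP [/eqP ->|hi].
  apply: hn => j hj; apply: hb; exact: leq_trans hj (leq_maxr _ _).
apply: ih => // j hj; apply: hb; exact: leq_trans hj (leq_maxl _ _).
Qed.

Lemma fin_y (xs : seq E) : exists K, forall x, x \in xs -> exists i, (i < K)%N /\ y i = x.
Proof.
elim: xs => [|x xs [K ih]]; first by exists 0%N.
have [k hk] := hy x.
exists (maxn K k.+1) => z; rewrite in_cons => /orP [/eqP ->|/ih [i [hi <-]]].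
  by exists k; split => //; rewrite leq_max ltnSn orbT.
by exists i; split => //; rewrite leq_max hi.
Qed.

Definition splok Q s K (r : seq nat * seq nat * nat) :=
  [/\ pext s r.1.1 /\ pext s r.1.2, (size s < size r.1.1)%N /\ (size s < size r.1.2)%N,
      (K < r.2)%N, ~ countable (nimg Q r.1.1) /\ ~ countable (nimg Q r.1.2) &
      cstk r.1.1 r.2 /\ cstk r.1.2 r.2 /\ sepk r.1.1 r.1.2 r.2].

Lemma split_node Q s K : ~ countable (nimg Q s) -> exists r, splok Q s K r.
Proof.
move=> hs.
pose good a := forall L, ~ countable (nimg Q (mkseq a L)).
pose X := [set a | Nb s a /\ Q (f a)].
have [a1 [a2 [[X1 g1] [[X2 g2] hne]]]] : exists a1 a2, (X a1 /\ good a1) /\ (X a2 /\ good a2) /\ f a1 <> f a2.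
  apply: contrapT => H.
  pose Bad := \bigcup_(p in [set p : seq nat | countable (nimg Q p)]) nimg Q p.
  have cBad : countable Bad by apply: bigcup_countable => //.
  have cGd : countable (f @` (X `&` good)).
    case: (pselect (exists a0, (X `&` good) a0)) => [[a0 ha0]|hn].
      apply: sub_countable (countable1 (f a0)); apply: subset_card_le.
      move=> T [a ha <-] /=; apply: contrapT => hT; apply: H.
      by exists a, a0; split; [|split] => //; case: ha0.
    have -> : f @` (X `&` good) = set0.
      by apply/seteqP; split => T // [a ha _]; apply: hn; exists a.
    exact: countable0.
  apply: hs; apply: sub_countable (countableU2 cBad cGd); apply: subset_card_le.
  move=> T [a [ha [hq <-]]].
  case: (pselect (good a)) => hg; first by right; exists a.
  left; have [L hL] : exists L, countable (nimg Q (mkseq a L)).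
    by apply: contrapT => hn; apply: hg => L hL; apply: hn; exists L.
  exists (mkseq a L) => //; exists a; split => //; by apply/Nb_mkseq.
have [x hx] : exists x, f a1 x <> f a2 x.
  apply: contrapT => hn; apply: hne; apply: funext => x; apply: contrapT => h; apply: hn; by exists x.
have [j hj] := hy x; subst x.
pose K' := (maxn K j).+1.
have [L1 hL1] := cont_list a1 K'.
have [L2 hL2] := cont_list a2 K'.
pose L := maxn (maxn L1 L2) (size s).+1.
have hL1L : (L1 <= L)%N by rewrite /L !leq_max leqnn.
have hL2L : (L2 <= L)%N by rewrite /L !leq_max leqnn orbT.
have hsL : (size s < L)%N by rewrite /L leq_max leqnn orbT.
have hext : forall a, X a -> pext s (mkseq a L).
  move=> a [ha _]; split; first by rewrite size_mkseq ltnW.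
  by move=> i hi; rewrite nth_mkseq ?ha // (leq_trans hi (ltnW hsL)).
exists (mkseq a1 L, mkseq a2 L, K'); split => /=.
- by split; apply: hext.
- by rewrite !size_mkseq.
- by rewrite /K' ltnS leq_maxl.
- by split; [apply: g1|apply: g2].
have hc : forall a0 L0, (L0 <= L)%N ->
   (forall b, (forall i, (i < L0)%N -> b i = a0 i) -> forall i, (i < K')%N -> f b (y i) = f a0 (y i)) ->
   cstk (mkseq a0 L) K'.
  move=> a0 L0 hL0 hh a b /Nb_mkseq ha /Nb_mkseq hb i hi.
  rewrite !hh // => k hk; [apply: hb|apply: ha]; exact: leq_trans hk hL0.
split; first exact: hc hL1L hL1.
split; first exact: hc hL2L hL2.
exists j; split; first by rewrite /K' ltnS leq_maxr.
move=> a b /Nb_mkseq ha /Nb_mkseq hb.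
rewrite (hL1 a) ?(hL2 b) ?ltnS ?leq_maxr //.
- by move=> k hk; apply: hb; exact: leq_trans hk hL2L.
- by move=> k hk; apply: ha; exact: leq_trans hk hL1L.
Qed.

End Fus.

Unset Implicit Arguments.
Unset Strict Implicit.
Unset Printing Implicit Defensive.

Fixpoint lv (n : nat) : seq (seq bool) :=
  if n is n'.+1 then map (cons false) (lv n') ++ map (cons true) (lv n') else [:: [::]].

Lemma lv_mem t : t \in lv (size t).
Proof.
elim: t => [|b t ih] //=; rewrite mem_cat; case: b; apply/orP; [right|left]; exact: map_f.
Qed.

Lemma lv_size n t : t \in lv n -> size t = n.
Proof.
elim: n t => [|n ih] t /=; first by rewrite inE => /eqP ->.
by rewrite mem_cat => /orP [] /mapP [t' /ih h ->] /=; rewrite h.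
Qed.

Fixpoint br (b : nat -> bool) n : seq bool := if n is n'.+1 then b n' :: br b n' else [::].

Lemma size_br b n : size (br b n) = n.
Proof. by elim: n => //= n ->. Qed.

Lemma br_eq b b' n : (forall i, (i < n)%N -> b' i = b i) -> br b' n = br b n.
Proof.
elim: n => //= n ih h; rewrite h // ih // => i hi; apply: h; exact: ltnW.
Qed.

Section Tree.
Variables (F : fieldType) (E : lmodType F) (f : (nat -> nat) -> (E -> E)).
Variable y : nat -> E.
Hypothesis hy : forall x, exists k, y k = x.
Variable Qv : seq E -> (E -> E) -> Prop.
Hypothesis Hmono : forall vs v T, Qv (rcons vs v) T -> Qv vs T.
Hypothesis Hclosed : forall vs T, (forall xs : seq E, exists S, Qv vs S /\ agree_on xs S T) -> Qv vs T.
Variable stepv : seq E -> seq (seq nat) -> E.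
Hypothesis Hstepv : forall vs ss, (forall s, s \in ss -> ~ countable (nimg f (Qv vs) s)) ->
  forall s, s \in ss -> ~ countable (nimg f (Qv (rcons vs (stepv vs ss))) s).
Variable spl : seq E -> seq nat -> nat -> seq nat * seq nat * nat.
Hypothesis Hspl : forall vs s K, ~ countable (nimg f (Qv vs) s) ->
  splok f y (Qv vs) s K (spl vs s K).
Variable s0 : seq nat.
Hypothesis Hinit : ~ countable (nimg f (Qv [::]) s0).

Fixpoint state n : seq E * (seq bool -> seq nat * nat) :=
  if n is n'.+1 then
    let st := state n' in
    let vs' := rcons st.1 (stepv st.1 [seq (st.2 t).1 | t <- lv n']) in
    (vs', fun t => if t is b :: t' then
                     let r := spl vs' (st.2 t').1 (st.2 t').2 in
                     (if b then r.1.2 else r.1.1, r.2)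
                   else (s0, 0%N))
  else ([::], fun _ => (s0, 0%N)).

Definition vsl n := (state n).1.
Definition nd n t := (state n).2 t.

Lemma vsl_succ n : vsl n.+1 = rcons (vsl n) (stepv (vsl n) [seq (nd n t).1 | t <- lv n]).
Proof. by []. Qed.

Lemma nd_succ n b t : nd n.+1 (b :: t) =
  (if b then (spl (vsl n.+1) (nd n t).1 (nd n t).2).1.2
   else (spl (vsl n.+1) (nd n t).1 (nd n t).2).1.1,
   (spl (vsl n.+1) (nd n t).1 (nd n t).2).2).
Proof. by []. Qed.

Lemma size_vsl n : size (vsl n) = n.
Proof. by elim: n => // n ih; rewrite vsl_succ size_rcons ih. Qed.

Lemma tree_inv n : forall t, size t = n ->
  ~ countable (nimg f (Qv (vsl n)) (nd n t).1) /\ (n <= (nd n t).2)%N /\ cstk f y (nd n t).1 (nd n t).2.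
Proof.
elim: n => [|n ih] t.
  by move/size0nil => -> /=; split => //; split => // a b _ _ i.
case: t => // b t [ht].
have hup : ~ countable (nimg f (Qv (vsl n.+1)) (nd n t).1).
  rewrite vsl_succ; apply: Hstepv; last by apply/mapP; exists t => //; rewrite -ht lv_mem.
  by move=> s /mapP [t' ht' ->]; apply: (ih t' (lv_size _ _ ht')).1.
have [_ [hn _]] := ih t ht.
have [_ _ hK [hu1 hu2] [hc1 [hc2 _]]] := Hspl _ _ (nd n t).2 hup.
rewrite nd_succ; split; first by case: b.
split; first exact: leq_trans hK.
by case: b.
Qed.

Lemma node_up n t : size t = n -> ~ countable (nimg f (Qv (vsl n.+1)) (nd n t).1).
Proof.
move=> ht; rewrite vsl_succ; apply: Hstepv; last by apply/mapP; exists t => //; rewrite -ht lv_mem.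
by move=> s /mapP [t' ht' ->]; apply: (tree_inv _ _ (lv_size _ _ ht')).1.
Qed.

Lemma child_ok n t : size t = n ->
  splok f y (Qv (vsl n.+1)) (nd n t).1 (nd n t).2 (spl (vsl n.+1) (nd n t).1 (nd n t).2).
Proof. move=> ht; exact: Hspl _ _ _ (node_up _ _ ht). Qed.

Definition sb b n := (nd n (br b n)).1.
Definition Kb b n := (nd n (br b n)).2.

Lemma sb_succ b n : pext (sb b n) (sb b n.+1) /\ (size (sb b n) < size (sb b n.+1))%N.
Proof.
have [[h1 h2] [h3 h4] _ _ _] := child_ok _ _ (size_br b n).
by rewrite /sb [br b n.+1]/= nd_succ; case: (b n).
Qed.

Lemma size_sb b n : (n <= size (sb b n))%N.
Proof. elim: n => // n ih; exact: leq_ltn_trans ih (sb_succ b n).2. Qed.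

Lemma pext_refl s : pext s s.
Proof. by split. Qed.

Lemma sb_ext b n m : (n <= m)%N -> pext (sb b n) (sb b m).
Proof.
elim: m => [|m ih]; first by rewrite leqn0 => /eqP ->; exact: pext_refl.
rewrite leq_eqVlt => /orP [/eqP ->|]; first exact: pext_refl.
rewrite ltnS => /ih h; exact: ext_trans h (sb_succ b m).1.
Qed.

Definition alpha b i := nth 0%N (sb b i.+1) i.

Lemma Nb_alpha b n : Nb (sb b n) (alpha b).
Proof.
move=> i hi; rewrite /alpha; case: (leqP i.+1 n) => h.
  have [_ he] := sb_ext b _ _ h; rewrite he //; exact: leq_trans (size_sb b i.+1).
have [_ he] := sb_ext b _ _ (ltnW h); by rewrite he.
Qed.

Definition Tb b := f (alpha b).

Lemma mono_n n m T : (n <= m)%N -> Qv (vsl m) T -> Qv (vsl n) T.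
Proof.
elim: m => [|m ih]; first by rewrite leqn0 => /eqP ->.
rewrite leq_eqVlt => /orP [/eqP -> //|]; rewrite ltnS => h hq; apply: ih => //.
by move: hq; rewrite vsl_succ; apply: Hmono.
Qed.

Lemma Kb_ge b n : (n <= Kb b n)%N.
Proof. exact: (tree_inv _ _ (size_br b n)).2.1. Qed.

Lemma cst_b b n : cstk f y (sb b n) (Kb b n).
Proof. exact: (tree_inv _ _ (size_br b n)).2.2. Qed.

Lemma Q_Tb b n : Qv (vsl n) (Tb b).
Proof.
apply: Hclosed => xs; have [K hK] := fin_y hy xs.
pose m := maxn n K.
have [T [a [ha [hq _]]]] := uncount_ne (tree_inv _ _ (size_br b m)).1.
exists (f a); split; first exact: mono_n _ _ _ (leq_maxl n K) hq.
move=> x /hK [i [hi <-]]; rewrite /Tb.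
have := cst_b b m; move=> /(_ a (alpha b) ha (Nb_alpha b m) i); apply.
apply: leq_trans (Kb_ge b m); exact: leq_trans hi (leq_maxr n K).
Qed.

Definition PP := [set T | exists b, Tb b = T].

Lemma cl_split t T : (forall xs, exists b, br b (size t) = t /\ agree_on xs (Tb b) T) ->
  (forall xs, exists b, br b (size t).+1 = true :: t /\ agree_on xs (Tb b) T) \/
  (forall xs, exists b, br b (size t).+1 = false :: t /\ agree_on xs (Tb b) T).
Proof.
move=> hcl; apply: contrapT => /not_orP [h1 h0].
case/existsNP: h1 => xs1 hx1.
case/existsNP: h0 => xs0 hx0.
have [b [hb ha]] := hcl (xs1 ++ xs0).
case hbn: (b (size t)).
  apply: hx1; exists b; split; first by rewrite /= hbn hb.
  by move=> x hx; apply: ha; rewrite mem_cat hx.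
apply: hx0; exists b; split; first by rewrite /= hbn hb.
by move=> x hx; apply: ha; rewrite mem_cat hx orbT.
Qed.

Lemma PP_closed T : (forall xs, exists S, PP S /\ agree_on xs S T) -> PP T.
Proof.
move=> hT.
pose cl t := forall xs, exists b, br b (size t) = t /\ agree_on xs (Tb b) T.
pose ch t := asbool (cl (true :: t)).
have hch : forall t, cl t -> cl (ch t :: t).
  move=> t ht; rewrite /ch; case: (asboolP (cl (true :: t))) => // hn.
  by case: (cl_split _ _ ht).
pose fix str n := if n is n'.+1 then ch (str n') :: str n' else [::].
have hsz : forall n, size (str n) = n by elim=> //= n ->.
have hcl : forall n, cl (str n).
  elim=> [|n ih] /=; last exact: hch.
  move=> xs; have [S [[b <-] hS]] := hT xs; by exists b.
pose bs n := ch (str n).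
have hbr : forall n, br bs n = str n by elim=> //= n ->.
exists bs; apply: funext => x; have [k <-] := hy x.
have [b' [hb' ha]] := hcl k.+1 [:: y k]; rewrite hsz in hb'.
rewrite -(ha (y k)) ?mem_head //.
have hs : sb b' k.+1 = sb bs k.+1 by rewrite /sb hb' hbr.
rewrite /Tb; apply: (cst_b bs k.+1 (alpha bs) (alpha b') (Nb_alpha bs k.+1)); first by rewrite -hs; exact: Nb_alpha.
exact: leq_trans (ltnSn k) (Kb_ge bs k.+1).
Qed.

Lemma sep_level n t : size t = n ->
  sepk f y (nd n.+1 (false :: t)).1 (nd n.+1 (true :: t)).1 (nd n.+1 (true :: t)).2.
Proof. by move=> ht; have [_ _ _ _ [_ [_ h]]] := child_ok _ _ ht; rewrite !nd_succ. Qed.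

Lemma PP_noniso b xs : exists S, PP S /\ S <> Tb b /\ agree_on xs S (Tb b).
Proof.
have [K hK] := fin_y hy xs.
pose b' i := if i == K then ~~ b K else b i.
have hbr : br b' K = br b K by apply: br_eq => i hi; rewrite /b' ltn_eqF.
have hs : sb b' K = sb b K by rewrite /sb hbr.
exists (Tb b'); split; first by exists b'.
split; last first.
  move=> x /hK [i [hi <-]]; rewrite /Tb; apply: (cst_b b K (alpha b') (alpha b) _ (Nb_alpha b K)); first by rewrite -hs; exact: Nb_alpha.
  exact: leq_trans hi (Kb_ge b K).
have [j [_ hj]] := sep_level _ _ (size_br b K).
have h1 : forall c, Nb (nd K.+1 (c :: br b K)).1 (if c == b K then alpha b else alpha b').
  move=> c; case: eqP => [->|hc]; first exact: (Nb_alpha b K.+1).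
  have hc' : c = ~~ b K by move: hc; case: (b K); case: c.
  have := Nb_alpha b' K.+1; rewrite /sb [br b' K.+1]/= hbr.
  by have -> : b' K = c by rewrite /b' eqxx hc'.
move=> heq; case hbK: (b K).
  have := hj _ _ (h1 false) (h1 true); rewrite hbK /=.
  by rewrite /Tb in heq; rewrite heq.
have := hj _ _ (h1 false) (h1 true); rewrite hbK /=.
by rewrite /Tb in heq; rewrite heq.
Qed.

Lemma tree_main : exists (P : set (E -> E)) (vl : nat -> seq E),
  (exists T, P T) /\ (P `<=` range f) /\ (forall n, size (vl n) = n) /\
  (forall n, exists v, vl n.+1 = rcons (vl n) v) /\ (forall T n, P T -> Qv (vl n) T) /\
  (forall T, (forall xs, exists S, P S /\ agree_on xs S T) -> P T) /\
  (forall T, P T -> forall xs, exists S, P S /\ S <> T /\ agree_on xs S T).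
Proof.
exists PP, vsl; split; first by exists (Tb (fun _ => false)), (fun _ => false).
split; first by move=> T [b <-]; exists (alpha b).
split; first exact: size_vsl.
split; first by move=> n; rewrite vsl_succ; eexists.
split; first by move=> T n [b <-]; exact: Q_Tb.
split; first exact: PP_closed.
move=> T [b <-] xs; exact: PP_noniso.
Qed.
End Tree.


Set Implicit Arguments.
Unset Strict Implicit.
Unset Printing Implicit Defensive.

Lemma fusion (F : fieldType) (E : lmodType F) (f : (nat -> nat) -> (E -> E))
  (hf : baire_continuous f) (y : nat -> E) (hy : forall x, exists k, y k = x)
  (hLE : forall a, LE (f a)) (Qv : seq E -> (E -> E) -> Prop)
  (Hmono : forall vs v T, Qv (rcons vs v) T -> Qv vs T)
  (Hclosed : forall vs T, (forall xs : seq E, exists S, Qv vs S /\ agree_on xs S T) -> Qv vs T)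
  (Hstep : forall vs (ss : seq (seq nat)), (forall s, s \in ss -> ~ countable (nimg f (Qv vs) s)) ->
     exists v, forall s, s \in ss -> ~ countable (nimg f (Qv (rcons vs v)) s))
  (s0 : seq nat) (Hinit : ~ countable (nimg f (Qv [::]) s0)) :
  exists (P : set (E -> E)) (vl : nat -> seq E),
    (exists T, P T) /\ LE_perfect P /\ P `<=` range f /\ (forall n, size (vl n) = n) /\
    (forall n, exists v, vl n.+1 = rcons (vl n) v) /\ (forall T n, P T -> Qv (vl n) T).
Proof.
have hs : forall p : seq E * seq (seq nat), exists v,
    (forall s, s \in p.2 -> ~ countable (nimg f (Qv p.1) s)) ->
    forall s, s \in p.2 -> ~ countable (nimg f (Qv (rcons p.1 v)) s).
  move=> [vs ss] /=; case: (pselect (forall s, s \in ss -> ~ countable (nimg f (Qv vs) s))) => h.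
    by have [v hv] := Hstep vs ss h; exists v.
  by exists 0.
have [stv hstv] := choice hs.
have hp : forall p : seq E * seq nat * nat, exists r,
    ~ countable (nimg f (Qv p.1.1) p.1.2) -> splok f y (Qv p.1.1) p.1.2 p.2 r.
  move=> [[vs s] K] /=; case: (pselect (~ countable (nimg f (Qv vs) s))) => h.
    by have [r hr] := split_node hf hy K h; exists r.
  by exists ([::], [::], 0%N).
have [sp hsp] := choice hp.
have := tree_main F E f y hy Qv Hmono Hclosed (fun vs ss => stv (vs, ss))
   (fun vs ss => hstv (vs, ss)) (fun vs s K => sp (vs, s, K))
   (fun vs s K => hsp (vs, s, K)) s0 Hinit.
move=> [P [vl [hne [hr [hsz [hsucc [hq [hcl hni]]]]]]]].
exists P, vl; split => //; split; last by [].
split; first by split => [T /hr [a _ <-]|T _ /hcl]; [exact: hLE|].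
exact: hni.
Qed.

Set Implicit Arguments.
Unset Strict Implicit.
Unset Printing Implicit Defensive.

Lemma pigeon (U : Type) (C : countType) (X : set U) (g : U -> C) :
  ~ countable X -> exists c, ~ countable (X `&` [set u | g u = c]).
Proof.
move=> hX; apply: contrapT => hn; apply: hX.
have : countable (\bigcup_(c in [set: C]) (X `&` [set u | g u = c])).
  apply: bigcup_countable => // c _; apply: contrapT => hc; apply: hn; by exists c.
apply: sub_countable; apply: subset_card_le => u hu; by exists (g u).
Qed.

Lemma inf_pigeon (g : nat -> nat) m : (forall n, (g n < m)%N) ->
  exists j (J : nat -> nat), (forall k, (J k < J k.+1)%N) /\ forall k, g (J k) = j.
Proof.
move=> hg.
have [j hj] : exists j, forall a, exists n, (a <= n)%N /\ g n = j.
  apply: contrapT => H.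
  have H' : forall j, exists a, forall n, (a <= n)%N -> g n <> j.
    move=> j; apply: contrapT => hn; apply: H; exists j => a.
    apply: contrapT => ha; apply: hn; exists a => n hn' hgn; apply: ha; by exists n.
  have [A hA] := choice H'.
  pose M := (\max_(j < m) A j)%N.
  apply: (hA (g M) M) => //.
  exact: (@leq_bigmax_cond _ xpredT (fun j : 'I_m => A j) (Ordinal (hg M))).
have [h hh] := choice hj.
pose fix J k := if k is k'.+1 then h (J k').+1 else h 0%N.
exists j, J; split; last by case => [|k] /=; exact: (hh _).2.
by move=> k /=; exact: (hh _).1.
Qed.

Lemma inc_ge (J : nat -> nat) : (forall k, (J k < J k.+1)%N) -> forall k, (k <= J k)%N.
Proof. by move=> hJ; elim=> // k ih; exact: leq_ltn_trans ih (hJ k). Qed.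

Lemma inc_inj (J : nat -> nat) : (forall k, (J k < J k.+1)%N) -> injective J.
Proof.
move=> hJ m n hmn; have hlt := homo_ltn ltn_trans hJ.
case: (ltngtP m n) => // h; have := hlt _ _ h; by rewrite hmn ltnn.
Qed.

Section Main.
Variables (F : fieldType) (E : lmodType F) (e : nat -> E).
Hypothesis he : nat_basis e.
Variable f : (nat -> nat) -> (E -> E).
Hypothesis hLE : forall a, LE (f a).
Variable y : nat -> E.
Hypothesis hy : forall x, exists k, y k = x.

Definition Rr (ws : seq E) (J : nat -> nat) (T : E -> E) :=
  forall k, inspan (map T ws) (T (e (J k))).
Definition CaseI := exists s0 ws (J : nat -> nat), (forall k, (J k < J k.+1)%N) /\
  ~ countable (nimg f (Rr ws J) s0).
Definition Qii (vs : seq E) (T : E -> E) := indep (map T vs).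

Lemma step_ii : ~ CaseI -> forall vs (ss : seq (seq nat)),
  (forall s, s \in ss -> ~ countable (nimg f (Qii vs) s)) ->
  exists v, forall s, s \in ss -> ~ countable (nimg f (Qii (rcons vs v)) s).
Proof.
move=> hnI vs ss hss; apply: contrapT => H.
have H' : forall v, exists s, s \in ss /\ countable (nimg f (Qii (rcons vs v)) s).
  move=> v; apply: contrapT => hn; apply: H; exists v => s hs hc; apply: hn; by exists s.
have [sel hsel] := choice H'.
pose g n := index (sel (e n)) ss.
have hg : forall n, (g n < size ss)%N by move=> n; rewrite /g index_mem; exact: (hsel _).1.
have [j [J [hJ hJj]]] := inf_pigeon hg.
pose s := nth [::] ss j.
have hsJ : forall k, sel (e (J k)) = s.
  by move=> k; rewrite /s -(hJj k) /g nth_index //; exact: (hsel _).1.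
have hsin : s \in ss by rewrite -(hsJ 0%N); exact: (hsel _).1.
apply: (hss s hsin).
have cR : countable (nimg f (Rr vs J) s) by apply: contrapT => hc; apply: hnI; exists s, vs, J.
have cB : countable (\bigcup_(k in [set: nat]) nimg f (Qii (rcons vs (e (J k)))) s).
  by apply: bigcup_countable => // k _; rewrite -(hsJ k); exact: (hsel _).2.
apply: sub_countable (countableU2 cR cB); apply: subset_card_le.
move=> T [a [ha [hq <-]]].
case: (pselect (exists k, Qii (rcons vs (e (J k))) (f a))) => [[k hk]|hn].
  by right; exists k => //; exists a.
left; exists a; split => //; split => // k; apply: not_indep_rcons => //.
by rewrite -map_rcons => hk; apply: hn; exists k.
Qed.


Definition Qi ws (J : nat -> nat) vs (T : E -> E) :=
  Rr ws J T /\ indep vs /\ (forall x, x \in vs -> T x = 0).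

Lemma lin_sum_ord (T : E -> E) (hT : is_linear_map T) n (c : 'I_n -> F) (g : 'I_n -> E) :
  T (\sum_(i < n) c i *: g i) = \sum_(i < n) c i *: T (g i).
Proof.
rewrite (big_morph T (linTD hT) (linT0 hT)); apply: eq_bigr => i _; exact: linTZ.
Qed.

Lemma step_i ws J : (forall k, (J k < J k.+1)%N) -> forall vs (ss : seq (seq nat)),
  (forall s, s \in ss -> ~ countable (nimg f (Qi ws J vs) s)) ->
  exists v, forall s, s \in ss -> ~ countable (nimg f (Qi ws J (rcons vs v)) s).
Proof.
move=> hJ vs ss hss.
case: (pselect (ss = [::])) => hss0; first by exists 0 => s; rewrite hss0.
have [s1 hs1] : exists s1, s1 \in ss by case: ss hss0 {hss} => // s1 ss' _; exists s1; exact: mem_head.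
have [T0 [a0 [_ [[_ [hvs _]] _]]]] := uncount_ne (hss s1 hs1).
pose m := size ss; pose d := size ws; pose N := (m * d).+1.
have [a ha] := list_in_e he vs.
pose us (i : 'I_N) := e (J (a + i)).
pose xs := ws ++ [seq us i | i <- enum 'I_N].
have [yinv hyinv] : exists yinv : E -> nat, forall x, y (yinv x) = x.
  by have [g hg] := choice hy; exists g.
pose X (j : 'I_m) := nimg f (Qi ws J vs) (nth [::] ss j).
have hX : forall j : 'I_m, ~ countable (X j) by move=> j; apply: hss; exact: mem_nth.
have hTj : forall j : 'I_m, exists Tj, X j Tj /\ ~ countable (X j `&` [set T | agree_on xs T Tj]).
  move=> j; have [c hc] := pigeon (fun T => [seq yinv (T x) | x <- xs]) (hX j).
  have [Tj [hXj hTj]] := uncount_ne hc.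
  exists Tj; split => //; apply: uncount_sub hc => T [hXT hT]; split => //.
  move=> x hx; rewrite -(hyinv (T x)) -(hyinv (Tj x)); congr y.
  have heq : [seq yinv (T x) | x <- xs] = [seq yinv (Tj x) | x <- xs] by rewrite hT hTj.
  by move/eq_in_map: heq => /(_ x hx).
have [Tj hTj'] := choice hTj.
have hC : forall p : 'I_m * 'I_N, exists c : nat -> F,
    Tj p.1 (us p.2) = \sum_(k < size (map (Tj p.1) ws)) c k *: nth 0 (map (Tj p.1) ws) k.
  move=> [j i] /=; have [[al [_ [[hR _] hal]]] _] := hTj' j.
  rewrite -hal; exact: hR (a + i)%N.
have [C hCc] := choice hC.
have hcard : (#|{: 'I_m * 'I_d}| < N)%N by rewrite card_prod !card_ord.
have [cv [[i0 hi0] hcv]] := kernel_vec (fun (i : 'I_N) (p : 'I_m * 'I_d) => C (p.1, i) p.2) hcard.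
pose v := \sum_(i < N) cv i *: us i.
exists v => s hs.
have hjm : (index s ss < m)%N by rewrite index_mem.
pose j := Ordinal hjm.
have hsj : nth [::] ss j = s by rewrite /= nth_index.
apply: uncount_sub (hTj' j).2.
move=> T [[al [hN [[hR [_ hk]] halT]]] hag].
exists al; split; first by rewrite -hsj.
split; last exact: halT.
split; first exact: hR.
split.
  apply: indep_rcons hvs _ => hsp; have [b hb] := span_in_e ha hsp.
  have hinj : injective (fun i => J (a + i)%N).
    by move=> i i' /(inc_inj hJ) /addnI.
  have hge : forall i, (a <= J (a + i))%N.
    by move=> i; exact: leq_trans (leq_addr i a) (inc_ge hJ _).
  have hz := basis_sep he (c := fun i => if insub i is Some i' then cv i' else 0) (b := b) (N := N) hinj hge.
  suff : (if insub (i0 : nat) is Some i' then cv i' else 0) = 0.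
    by rewrite valK => h0; move/eqP: hi0.
  apply: (hz _ i0 (ltn_ord i0)).
  rewrite -hb /v; apply: eq_bigr => i _; by rewrite valK.
move=> x; rewrite mem_rcons in_cons => /orP [/eqP ->|]; last exact: hk.
rewrite /v (lin_sum_ord (hLE al)) halT.
rewrite (eq_bigr (fun i : 'I_N => \sum_(k < size (map (Tj j) ws))
           (cv i * C (j, i) k) *: nth 0 (map (Tj j) ws) k)); last first.
  move=> i _; rewrite hag; last by rewrite mem_cat; apply/orP; right; apply: map_f; exact: mem_enum.
  by rewrite (hCc (j, i)) scaler_sumr; apply: eq_bigr => k _; rewrite scalerA.
rewrite exchange_big /= big1 // => k _; rewrite -scaler_suml.
have := hcv (j, cast_ord (size_map (Tj j) ws) k); rewrite /= => ->.
exact: scale0r.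
Qed.

End Main.

Set Implicit Arguments.
Unset Strict Implicit.
Unset Printing Implicit Defensive.

Section VV.
Variables (F : fieldType) (E : lmodType F).

Lemma inspan_rcons (xs : seq E) x v : inspan xs v -> inspan (rcons xs x) v.
Proof.
move=> [c ->]; exists (fun i => if i == size xs then 0 else c i).
rewrite (sum_rcons xs x (fun i => if i == size xs then 0 else c i)) eqxx scale0r addr0.
by apply: eq_bigr => i _; rewrite ltn_eqF.
Qed.

Variable vl : nat -> seq E.
Hypothesis hsucc : forall n, exists v, vl n.+1 = rcons (vl n) v.

Lemma inspan_mono n m v : (n <= m)%N -> inspan (vl n) v -> inspan (vl m) v.
Proof.
elim: m => [|m ih]; first by rewrite leqn0 => /eqP ->.
rewrite leq_eqVlt => /orP [/eqP -> //|]; rewrite ltnS => h /(ih h).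
by have [x ->] := hsucc m; apply: inspan_rcons.
Qed.

Definition VV := [set v : E | exists n, inspan (vl n) v].

Lemma VV_common u v : VV u -> VV v -> exists n, inspan (vl n) u /\ inspan (vl n) v.
Proof.
move=> [n1 h1] [n2 h2]; exists (maxn n1 n2); split.
  exact: inspan_mono (leq_maxl _ _) h1.
exact: inspan_mono (leq_maxr _ _) h2.
Qed.

Lemma VV_sub : subspace VV.
Proof.
split; first by exists 0%N, (fun _ => 0); rewrite big1 // => i _; rewrite scale0r.
move=> a u v hu hv; have [n [[cu ->] [cv ->]]] := VV_common hu hv.
exists n, (fun i => a * cu i + cv i).
rewrite scaler_sumr -big_split /=; apply: eq_bigr => i _.
by rewrite scalerA scalerDl.
Qed.

Hypothesis hsize : forall n, size (vl n) = n.
Hypothesis hind : forall n, indep (vl n).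

Lemma VV_inf : infinite_dim VV.
Proof.
move=> n; exists (fun i : 'I_n => nth 0 (vl n) i); split.
  move=> i; exists n, (fun j : nat => (j == (i : nat))%:R).
  rewrite (bigD1 (cast_ord (esym (hsize n)) i)) //= eqxx scale1r big1 ?addr0 //.
  move=> j hj; rewrite (_ : (j == i :> nat) = false) ?scale0r //.
  by apply/negbTE; apply: contra hj => /eqP hji; apply/eqP/val_inj.
move=> c hc i.
have := @hind n (fun k => if insub k is Some k' then c k' else 0).
have hs := hsize n.
move=> /(_ _ i); rewrite valK; apply; last by rewrite hs.
rewrite -[RHS]hc; move: (vl n) hs => xs hs; rewrite hs.
by apply: eq_bigr => k _; rewrite valK.
Qed.
End VV.

Unset Implicit Arguments.

Theorem theorem2p1 (F : countFieldType) (E : lmodType F) (e : nat -> E)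
  (he : nat_basis e) (A : set (E -> E))
  (hA : LE_analytic A) (hunc : ~ countable A) :
  exists (P : set (E -> E)) (V : set E),
    (exists T, P T) /\ LE_perfect P /\ P `<=` A /\
    subspace V /\ infinite_dim V /\
    ((forall T, P T -> forall v, V v -> T v = 0) \/
     (forall T, P T -> forall u v, V u -> V v -> T u = T v -> u = v)).
Proof.
case: hA => hALE [hA0|[f [hf hrange]]].
  by exfalso; apply: hunc; rewrite hA0; exact: countable0.
have hLE : forall a, LE (f a) by move=> a; apply: hALE; rewrite -hrange; exists a.
have [y hy] := enum_E he.
have hPA : forall P : set (E -> E), P `<=` range f -> P `<=` A by move=> P hP; rewrite -hrange.
case: (pselect (CaseI e f)) => [[s0 [ws [J [hJ hI]]]]|hnI].
- have Hmono : forall vs v T, Qi e ws J (rcons vs v) T -> Qi e ws J vs T.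
    move=> vs v T [hR [hi hk]]; split => //; split; first exact: indep_rcons_inv hi.
    by move=> x hx; apply: hk; rewrite mem_rcons in_cons hx orbT.
  have Hclosed : forall vs T, (forall xs : seq E, exists S, Qi e ws J vs S /\ agree_on xs S T) ->
      Qi e ws J vs T.
    move=> vs T h; split.
      move=> k; have [S [[hR _] hag]] := h (e (J k) :: ws).
      have hm : map S ws = map T ws.
        by apply/eq_in_map => x hx; apply: hag; rewrite in_cons hx orbT.
      by rewrite -hm -(hag (e (J k))) ?mem_head //; exact: hR.
    split; first by have [S [[_ [hi _]] _]] := h [::].
    move=> x hx; have [S [[_ [_ hk]] hag]] := h vs; by rewrite -hag // hk.
  have Hinit : ~ countable (nimg f (Qi e ws J [::]) s0).
    refine (uncount_sub _ hI); move=> T [a [ha [hR <-]]]; exists a; split => //; split => //.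
  have [P [vl [hne [hperf [hPr [hsz [hsucc hq]]]]]]] :=
    fusion hf hy hLE Hmono Hclosed (step_i he hLE hy (ws := ws) hJ) Hinit.
  exists P, (VV vl); split => //; split => //; split; first exact: hPA.
  split; first exact: VV_sub.
  have hind : forall n, indep (vl n).
    by move=> n; have [T hT] := hne; have [_ [hi _]] := hq T n hT.
  split; first exact: VV_inf.
  left => T hT v [n [c ->]].
  have [a ha] : exists a, f a = T by have := hPr T hT; case=> a _ <-; exists a.
  have hlin := hLE a; rewrite ha in hlin.
  rewrite (linT_sum hlin) big1 // => i _.
  by have [_ [_ hk]] := hq T n hT; rewrite hk ?scaler0 // mem_nth.
- have Hmono : forall (vs : seq E) (v : E) (T : E -> E), Qii (rcons vs v) T -> Qii vs T.
    by move=> vs v T; rewrite /Qii map_rcons; apply: indep_rcons_inv.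
  have Hclosed : forall (vs : seq E) (T : E -> E), (forall xs : seq E, exists S, Qii vs S /\ agree_on xs S T) ->
      Qii vs T.
    move=> vs T h; have [S [hS hag]] := h vs.
    rewrite /Qii; have <- : map S vs = map T vs by apply/eq_in_map => x hx; exact: hag.
    exact: hS.
  have Hinit : ~ countable (nimg f (@Qii F E [::]) [::]).
    refine (uncount_sub _ hunc); move=> T hT; rewrite -hrange in hT; case: hT => a _ <-.
    exists a; split => //; split => //.
  have [P [vl [hne [hperf [hPr [hsz [hsucc hq]]]]]]] :=
    fusion hf hy hLE Hmono Hclosed (step_ii hnI) Hinit.
  have hlinP : forall T, P T -> is_linear_map T.
    by move=> T hT; have := hPr T hT; case=> a _ <-; exact: hLE.
  have [T0 hT0] := hne.
  have hind : forall n, indep (vl n).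
    move=> n c hc i hi; apply: (hq T0 n hT0 c) => //; last by rewrite size_map.
    rewrite size_map (eq_bigr (fun k : 'I_(size (vl n)) => c k *: T0 (nth 0 (vl n) k))); last first.
      by move=> k _; rewrite (nth_map 0).
    rewrite -(linT_sum (hlinP _ hT0)) hc; exact: linT0 (hlinP _ hT0).
  exists P, (VV vl); split; first by exists T0.
  split => //; split; first exact: hPA.
  split; first exact: VV_sub.
  split; first exact: VV_inf.
  right => T hT u v hu hv huv.
  have [n [[cu hcu] [cv hcv]]] := VV_common hsucc hu hv.
  have hlin := hlinP T hT.
  have hz : \sum_(i < size (map T (vl n))) (cu i - cv i) *: nth 0 (map T (vl n)) i = 0.
    rewrite size_map (eq_bigr (fun i : 'I_(size (vl n)) => cu i *: T (nth 0 (vl n) i) - cv i *: T (nth 0 (vl n) i))); last first.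
      by move=> i _; rewrite (nth_map 0) // scalerBl.
    rewrite sumrB -!(linT_sum hlin) -hcu -hcv huv; exact: subrr.
  have hq' : indep (map T (vl n)) := hq T n hT.
  have hc := hq' (fun i => cu i - cv i) hz.
  rewrite hcu hcv; apply: eq_bigr => i _.
  have := hc i; rewrite size_map => /(_ (ltn_ord i)) /eqP; rewrite subr_eq0 => /eqP ->.
  done.
Qed.
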